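(* Assume the stochastic matrix $A$ is irreducible and aperiodic, and let $\boldsymbol\mu$ be its (unique) stationary distribution. Then $$\tau_t(A)\longrightarrow\frac{1}{N\|\boldsymbol\mu\|^2}\qquad\text{as }t\to\infty.$$
   Context: Let $X$ be a square-integrable real random variable with $\mathbb E X=\theta$ and $\mathrm{Var}(X)=\sigma^2>0$. Fix an integer $N\geq 2$. For $i\in\{1,\dots,N\}$ and $t\geq 1$ let $X_t^{(i)}$ be random variables distributed as $X$, mutually independent over both $i$ and $t$, and write $\mathbf X_t=(X_t^{(1)},\dots,X_t^{(N)})^\top$. Let $A=(a_{ij})_{1\le i,j\le N}$ be a stochastic matrix ($a_{ij}\geq 0$ and every row sums to $1$). Define $\hat{\boldsymbol\theta}_1=\mathbf X_1$ and $\hat{\boldsymbol\theta}_{t+1}=\frac{t}{t+1}A\hat{\boldsymbol\theta}_t+\frac{1}{t+1}\mathbf X_{t+1}$ for $t\geq 1$. Let $\bar{\mathbb X}_{Nt}=\frac{1}{Nt}\sum_{i=1}^N\sum_{k=1}^t X_k^{(i)}$, $\mathbf 1=(1,\dots,1)^\top$, and let $\|\cdot\|$ denote the Euclidean norm. The performance ratio is $\tau_t(A)=\dfrac{\mathbb E\|(\bar{\mathbb X}_{Nt}-\theta)\mathbf 1\|^2}{\mathbb E\|\hat{\boldsymbol\theta}_t-\theta\mathbf 1\|^2}$, $t\geq 1$. $A$ is irreducible if for every $(i,j)$ there is $k\geq 0$ with $(A^k)_{ij}\neq 0$; aperiodic means the gcd of all $k\geq1$ with $(A^k)_{ii}>0$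 equals $1$. The stationary distribution is the probability row vector $\boldsymbol\mu$ with $\boldsymbol\mu A=\boldsymbol\mu$. *)

(* Defs.v *)
From Stdlib Require Import Reals Lra List.
Open Scope R_scope.

Fixpoint sumN (n : nat) (f : nat -> R) : R :=
  match n with O => 0 | S m => sumN m f + f m end.

Fixpoint mpow (N : nat) (A : nat -> nat -> R) (k : nat) : nat -> nat -> R :=
  match k with
  | O => fun i j => if Nat.eqb i j then 1 else 0
  | S k' => fun i j => sumN N (fun l => mpow N A k' i l * A l j)
  end.

Definition stochastic (N : nat) (A : nat -> nat -> R) : Prop :=
  (forall i j, (i < N)%nat -> (j < N)%nat -> 0 <= A i j) /\
  (forall i, (i < N)%nat -> sumN N (fun j => A i j) = 1).

Definition irreducible (N : nat) (A : nat -> nat -> R) : Prop :=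
  forall i j, (i < N)%nat -> (j < N)%nat -> exists k : nat, mpow N A k i j <> 0.

(* gcd of {k >= 1 | (A^k)_ii > 0} equals 1 (for every state i) *)
Definition aperiodic (N : nat) (A : nat -> nat -> R) : Prop :=
  forall i, (i < N)%nat ->
    forall d : nat,
      (forall k : nat, (1 <= k)%nat -> 0 < mpow N A k i i -> Nat.divide d k) ->
      d = 1%nat.

Definition stationary_distribution (N : nat) (A : nat -> nat -> R) (mu : nat -> R) : Prop :=
  (forall j, (j < N)%nat -> 0 <= mu j) /\
  sumN N mu = 1 /\
  (forall j, (j < N)%nat -> sumN N (fun i => mu i * A i j) = mu j).

Definition expectation_axioms {Omega : Type}
  (integrable : (Omega -> R) -> Prop) (E : (Omega -> R) -> R) : Prop :=
  (forall c : R, integrable (fun _ => c) /\ E (fun _ => c) = c) /\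
  (forall f g, integrable f -> integrable g ->
      integrable (fun w => f w + g w) /\ E (fun w => f w + g w) = E f + E g) /\
  (forall (c : R) f, integrable f ->
      integrable (fun w => c * f w) /\ E (fun w => c * f w) = c * E f) /\
  (forall f, integrable f -> (forall w, 0 <= f w) -> 0 <= E f).

Fixpoint prodL {A : Type} (l : list A) (g : A -> R) : R :=
  match l with nil => 1 | a :: l' => g a * prodL l' g end.

Definition valid_index (N : nat) (p : nat * nat) : Prop :=
  (1 <= fst p)%nat /\ (snd p < N)%nat.

(* X t i = X_t^{(i)};  mutual independence over (t,i): for every finite family of
   distinct indices and continuous (hence Borel) functions f_s with f_s(X_s)
   integrable, the product is integrable with expectation the product. *)
Definition mutually_independent {Omega : Type} (N : nat)
  (integrable : (Omega -> R) -> Prop) (E : (Omega -> R) -> R)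
  (X : nat -> nat -> Omega -> R) : Prop :=
  forall (l : list (nat * nat)) (f : nat * nat -> R -> R),
    NoDup l -> Forall (valid_index N) l ->
    (forall p, In p l -> continuity (f p)) ->
    (forall p, In p l -> integrable (fun w => f p (X (fst p) (snd p) w))) ->
    integrable (fun w => prodL l (fun p => f p (X (fst p) (snd p) w))) /\
    E (fun w => prodL l (fun p => f p (X (fst p) (snd p) w)))
      = prodL l (fun p => E (fun w => f p (X (fst p) (snd p) w))).

Definition identically_distributed {Omega : Type} (N : nat)
  (integrable : (Omega -> R) -> Prop) (E : (Omega -> R) -> R)
  (X0 : Omega -> R) (X : nat -> nat -> Omega -> R) : Prop :=
  forall t i (f : R -> R), (1 <= t)%nat -> (i < N)%nat -> continuity f ->
    (integrable (fun w => f (X t i w)) <-> integrable (fun w => f (X0 w))) /\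
    E (fun w => f (X t i w)) = E (fun w => f (X0 w)).

(* thetahat_aux n = \hat\theta_{n+1} *)
Fixpoint thetahat_aux {Omega : Type} (N : nat) (A : nat -> nat -> R)
  (X : nat -> nat -> Omega -> R) (n : nat) : nat -> Omega -> R :=
  match n with
  | O => fun i w => X 1%nat i w
  | S m => fun i w =>
      INR (S m) / INR (S (S m)) * sumN N (fun j => A i j * thetahat_aux N A X m j w)
      + / INR (S (S m)) * X (S (S m)) i w
  end.

(* \hat\theta_t, for t >= 1 *)
Definition thetahat {Omega : Type} (N : nat) (A : nat -> nat -> R)
  (X : nat -> nat -> Omega -> R) (t : nat) : nat -> Omega -> R :=
  thetahat_aux N A X (t - 1).

Definition Xbar {Omega : Type} (N : nat) (X : nat -> nat -> Omega -> R) (t : nat)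
  (w : Omega) : R :=
  / (INR N * INR t) * sumN N (fun i => sumN t (fun k => X (S k) i w)).

Definition tau {Omega : Type} (N : nat) (E : (Omega -> R) -> R) (X0 : Omega -> R)
  (A : nat -> nat -> R) (X : nat -> nat -> Omega -> R) (t : nat) : R :=
  E (fun w => sumN N (fun _ => (Xbar N X t w - E X0) ^ 2))
  / E (fun w => sumN N (fun i => (thetahat N A X t i w - E X0) ^ 2)).

(* Main.v *)
Require Import Defs.
From Stdlib Require Import Reals List Lra Lia Psatz Classical FunctionalExtensionality.
Open Scope R_scope.


Lemma sumN_ext n f g : (forall k, (k < n)%nat -> f k = g k) -> sumN n f = sumN n g.
Proof. induction n; simpl; intros H; auto. rewrite IHn by (intros; apply H; lia). rewrite H by lia; auto. Qed.

Lemma sumN_plus n f g : sumN n (fun k => f k + g k) = sumN n f + sumN n g.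
Proof. induction n; simpl; [lra|]. rewrite IHn; lra. Qed.

Lemma sumN_scal n c f : sumN n (fun k => c * f k) = c * sumN n f.
Proof. induction n; simpl; [lra|]. rewrite IHn; lra. Qed.

Lemma sumN_scal_r n c f : sumN n (fun k => f k * c) = sumN n f * c.
Proof. induction n; simpl; [lra|]. rewrite IHn; lra. Qed.

Lemma sumN_zero n : sumN n (fun _ => 0) = 0.
Proof. induction n; simpl; [lra|]. rewrite IHn; lra. Qed.

Lemma sumN_const n c : sumN n (fun _ => c) = INR n * c.
Proof. induction n; simpl sumN; [simpl; lra|]. rewrite IHn, S_INR; lra. Qed.

Lemma sumN_swap n m (f : nat -> nat -> R) :
  sumN n (fun i => sumN m (fun j => f i j)) = sumN m (fun j => sumN n (fun i => f i j)).
Proof.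
  induction n; simpl. - rewrite sumN_zero; auto.
  - rewrite IHn, <- sumN_plus; auto.
Qed.

Lemma sumN_add a b f : sumN (a + b) f = sumN a f + sumN b (fun k => f (a + k)%nat).
Proof. induction b; simpl. - rewrite Nat.add_0_r; lra.
  - rewrite Nat.add_succ_r; simpl; rewrite IHb; lra. Qed.

Lemma sumN_delta_l n i f : (i < n)%nat ->
  sumN n (fun j => (if Nat.eqb i j then 1 else 0) * f j) = f i.
Proof.
  induction n; intros H; [lia|]. simpl.
  destruct (Nat.eq_dec i n).
  - subst. rewrite Nat.eqb_refl. rewrite (sumN_ext _ _ (fun _ => 0)).
    + rewrite sumN_zero; lra.
    + intros k Hk. destruct (Nat.eqb_spec n k); [lia|lra].
  - rewrite IHn by lia. destruct (Nat.eqb_spec i n); [lia|lra].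
Qed.

Lemma sumN_delta_r n i f : (i < n)%nat ->
  sumN n (fun j => f j * (if Nat.eqb j i then 1 else 0)) = f i.
Proof.
  intros H. rewrite <- (sumN_delta_l n i f H). apply sumN_ext. intros k _.
  destruct (Nat.eqb_spec i k), (Nat.eqb_spec k i); subst; try lia; lra.
Qed.

Lemma sumN_nonneg n f : (forall k, (k < n)%nat -> 0 <= f k) -> 0 <= sumN n f.
Proof. induction n; simpl; intros H; [lra|]. pose proof (H n ltac:(lia)). pose proof (IHn ltac:(intros; apply H; lia)). lra. Qed.

Lemma sumN_le n f g : (forall k, (k < n)%nat -> f k <= g k) -> sumN n f <= sumN n g.
Proof. induction n; simpl; intros H; [lra|]. pose proof (H n ltac:(lia)). pose proof (IHn ltac:(intros; apply H; lia)). lra. Qed.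

Lemma sumN_ge_term n f k : (forall k, (k < n)%nat -> 0 <= f k) -> (k < n)%nat -> f k <= sumN n f.
Proof.
  induction n; simpl; intros H Hk; [lia|].
  destruct (Nat.eq_dec k n).
  - subst. pose proof (sumN_nonneg n f ltac:(intros; apply H; lia)). lra.
  - pose proof (IHn ltac:(intros; apply H; lia) ltac:(lia)). pose proof (H n ltac:(lia)). lra.
Qed.

Lemma sumN_abs n f : Rabs (sumN n f) <= sumN n (fun k => Rabs (f k)).
Proof. induction n; simpl. - rewrite Rabs_R0; lra.
  - eapply Rle_trans; [apply Rabs_triang|]. lra. Qed.

Lemma sumN_shift n f : sumN (S n) f = f 0%nat + sumN n (fun k => f (S k)).
Proof. induction n; simpl in *; [lra|]. rewrite IHn; lra. Qed.

Lemma sumN_rev n f : sumN n (fun k => f (n - 1 - k)%nat) = sumN n f.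
Proof.
  revert f; induction n; intros f; simpl; auto.
  rewrite (sumN_ext n _ (fun k => f (S (n - 1 - k)))) by (intros; f_equal; lia).
  rewrite (IHn (fun k => f (S k))). replace (n - 0 - n)%nat with 0%nat by lia.
  pose proof (sumN_shift n f) as H; simpl in H; lra.
Qed.

Lemma sumN_flatten T N (g : nat -> nat -> R) : (0 < N)%nat ->
  sumN T (fun k => sumN N (fun j => g k j)) = sumN (T * N) (fun p => g (p / N) (p mod N))%nat.
Proof.
  intros HN. induction T; simpl; auto.
  rewrite IHT. replace (N + T * N)%nat with (T * N + N)%nat by lia.
  rewrite sumN_add. f_equal. apply sumN_ext. intros j Hj.
  f_equal.
  - rewrite Nat.div_add_l by lia. rewrite Nat.div_small by lia. lia.
  - rewrite Nat.add_comm, Nat.Div0.mod_add. rewrite Nat.mod_small; lia.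
Qed.


Section M.
Variable N : nat.
Variable A : nat -> nat -> R.
Hypothesis HA : stochastic N A.

Lemma mpow_nonneg k i j : (i < N)%nat -> (j < N)%nat -> 0 <= mpow N A k i j.
Proof.
  revert i j; induction k; intros i j Hi Hj; simpl.
  - destruct (Nat.eqb i j); lra.
  - apply sumN_nonneg. intros l Hl. apply Rmult_le_pos; [apply IHk; auto| apply HA; auto].
Qed.

Lemma mpow_rowsum k i : (i < N)%nat -> sumN N (fun j => mpow N A k i j) = 1.
Proof.
  revert i; induction k; intros i Hi; simpl.
  - rewrite (sumN_ext _ _ (fun j => (if Nat.eqb i j then 1 else 0) * 1)) by (intros; lra).
    apply sumN_delta_l with (f := fun _ => 1); auto.
  - rewrite sumN_swap.
    rewrite (sumN_ext _ _ (fun l => mpow N A k i l * 1)).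
    + rewrite sumN_scal_r, IHk; auto; lra.
    + intros l Hl. rewrite sumN_scal. destruct HA as [_ H2]. rewrite H2; auto.
Qed.

Lemma mpow_add a b i j : (i < N)%nat -> (j < N)%nat ->
  mpow N A (a + b) i j = sumN N (fun l => mpow N A a i l * mpow N A b l j).
Proof.
  revert i j; induction b; intros i j Hi Hj.
  - rewrite Nat.add_0_r. simpl. symmetry. apply sumN_delta_r with (f := fun l => mpow N A a i l). auto.
  - rewrite Nat.add_succ_r. simpl.
    rewrite (sumN_ext _ _ (fun l => sumN N (fun m => mpow N A a i m * mpow N A b m l) * A l j)).
    2:{ intros l Hl. rewrite IHb; auto. }
    rewrite (sumN_ext N (fun l => mpow N A a i l * sumN N (fun m => mpow N A b l m * A m j))
       (fun l => sumN N (fun m => mpow N A a i l * mpow N A b l m * A m j))).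
    2:{ intros l Hl. rewrite <- sumN_scal. apply sumN_ext; intros; lra. }
    rewrite sumN_swap. apply sumN_ext. intros l Hl. rewrite <- sumN_scal_r. apply sumN_ext; intros; lra.
Qed.

Lemma mpow_1 i j : (i < N)%nat -> mpow N A 1 i j = A i j.
Proof. intros Hi. simpl. apply sumN_delta_l with (f := fun l => A l j); auto. Qed.

Lemma mpow_S_left b i j : (i < N)%nat -> (j < N)%nat ->
  mpow N A (S b) i j = sumN N (fun l => A i l * mpow N A b l j).
Proof.
  intros Hi Hj. change (S b) with (1 + b)%nat. rewrite mpow_add; auto.
  apply sumN_ext. intros l Hl. rewrite mpow_1; auto.
Qed.

Lemma mpow_stochastic k : stochastic N (mpow N A k).
Proof. split; intros; [apply mpow_nonneg|apply mpow_rowsum]; auto. Qed.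

End M.


Definition osc (N : nat) (v : nat -> R) (d : R) : Prop :=
  forall i i', (i < N)%nat -> (i' < N)%nat -> v i - v i' <= d.

Lemma argmin N (v : nat -> R) : (0 < N)%nat -> exists l0, (l0 < N)%nat /\ forall l, (l < N)%nat -> v l0 <= v l.
Proof.
  induction N; intros H; [lia|]. destruct N.
  - exists 0%nat. split; [lia|]. intros l Hl. replace l with 0%nat by lia. lra.
  - destruct IHN as [l0 [H1 H2]]; [lia|].
    destruct (Rle_dec (v l0) (v (S N))).
    + exists l0. split; [lia|]. intros l Hl. destruct (Nat.eq_dec l (S N)); [subst; auto|]. apply H2; lia.
    + exists (S N). split; [lia|]. intros l Hl. destruct (Nat.eq_dec l (S N)); [subst; lra|].
      pose proof (H2 l ltac:(lia)). lra.
Qed.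

Lemma contract N P (v : nat -> R) delta d : stochastic N P -> 0 <= delta ->
  (forall i j, (i < N)%nat -> (j < N)%nat -> delta <= P i j) -> 0 <= d -> osc N v d ->
  osc N (fun i => sumN N (fun l => P i l * v l)) ((1 - INR N * delta) * d).
Proof.
  intros [HP1 HP2] Hd0 Hdel Hd Hv i i' Hi Hi'.
  destruct (argmin N v ltac:(lia)) as [l0 [Hl0 Hmin]].
  set (w := fun l => v l - v l0).
  assert (E1 : forall a, (a < N)%nat -> sumN N (fun l => P a l * v l) = v l0 + sumN N (fun l => P a l * w l)).
  { intros a Ha. unfold w.
    rewrite (sumN_ext N (fun l => P a l * (v l - v l0)) (fun l => P a l * v l + (- v l0) * P a l)) by (intros; lra).
    rewrite sumN_plus, sumN_scal, HP2; auto. lra. }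
  rewrite (E1 i Hi), (E1 i' Hi').
  assert (Hw : forall l, (l < N)%nat -> 0 <= w l <= d).
  { intros l Hl. unfold w. split; [pose proof (Hmin l Hl); lra| apply Hv; auto]. }
  assert (B1 : sumN N (fun l => P i l * w l) - delta * sumN N w <= (1 - INR N * delta) * d).
  { rewrite <- sumN_scal.
    replace (sumN N (fun l => P i l * w l) - sumN N (fun l => delta * w l))
      with (sumN N (fun l => (P i l - delta) * w l)).
    2:{ rewrite (sumN_ext N (fun l => (P i l - delta) * w l) (fun l => P i l * w l + (-1) * (delta * w l))) by (intros; lra).
        rewrite sumN_plus, sumN_scal. lra. }
    apply Rle_trans with (sumN N (fun l => (P i l - delta) * d)).
    - apply sumN_le. intros l Hl. pose proof (Hw l Hl). pose proof (Hdel i l Hi Hl). nra.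
    - rewrite sumN_scal_r.
      rewrite (sumN_ext N (fun l => P i l - delta) (fun l => P i l + (-1) * delta)) by (intros; lra).
      rewrite sumN_plus, sumN_const, HP2; auto. lra. }
  assert (B2 : delta * sumN N w <= sumN N (fun l => P i' l * w l)).
  { rewrite <- sumN_scal. apply sumN_le. intros l Hl. pose proof (Hw l Hl). pose proof (Hdel i' l Hi' Hl). nra. }
  lra.
Qed.

Lemma stationary_pow N A mu k j : stochastic N A -> stationary_distribution N A mu -> (j < N)%nat ->
  sumN N (fun i => mu i * mpow N A k i j) = mu j.
Proof.
  intros HA Hmu. revert j. induction k; intros j Hj; simpl.
  - rewrite sumN_delta_r with (f := mu); auto.
  - rewrite (sumN_ext N (fun i => mu i * sumN N (fun l => mpow N A k i l * A l j))
       (fun i => sumN N (fun l => mu i * mpow N A k i l * A l j))).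
    2:{ intros; rewrite <- sumN_scal; apply sumN_ext; intros; lra. }
    rewrite sumN_swap.
    rewrite (sumN_ext N _ (fun l => mu l * A l j)).
    + destruct Hmu as [_ [_ H3]]. apply H3; auto.
    + intros l Hl. rewrite sumN_scal_r. rewrite IHk; auto.
Qed.

Section Conv.
Variable N : nat.
Variable A : nat -> nat -> R.
Variable mu : nat -> R.
Hypothesis HA : stochastic N A.
Hypothesis Hmu : stationary_distribution N A mu.
Hypothesis HN : (0 < N)%nat.

Lemma osc_step_gen a m j d : (j < N)%nat -> 0 <= d -> osc N (fun i => mpow N A m i j) d ->
  forall delta, 0 <= delta -> (forall i l, (i < N)%nat -> (l < N)%nat -> delta <= mpow N A a i l) ->
  osc N (fun i => mpow N A (a + m) i j) ((1 - INR N * delta) * d).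
Proof.
  intros Hj Hd Ho delta Hdel Hge i i' Hi Hi'.
  rewrite !mpow_add; auto.
  apply (contract N (mpow N A a) (fun l => mpow N A m l j)); auto.
  apply mpow_stochastic; auto.
Qed.

Lemma osc_mono m j d : (j < N)%nat -> 0 <= d -> osc N (fun i => mpow N A m i j) d ->
  forall n, osc N (fun i => mpow N A (n + m) i j) d.
Proof.
  intros Hj Hd Ho n. induction n; [exact Ho|].
  change (S n + m)%nat with (1 + (n + m))%nat.
  pose proof (osc_step_gen 1 (n + m) j d Hj Hd IHn 0 (Rle_refl 0)
    ltac:(intros; apply mpow_nonneg; auto)) as H.
  replace ((1 - INR N * 0) * d) with d in H by ring. exact H.
Qed.

Lemma entry_conv : forall K delta, 0 < delta ->
  (forall i l, (i < N)%nat -> (l < N)%nat -> delta <= mpow N A K i l) ->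
  forall i j, (i < N)%nat -> (j < N)%nat -> Un_cv (fun m => mpow N A m i j) (mu j).
Proof.
  intros K delta Hdel Hge i j Hi Hj.
  set (rho := 1 - INR N * delta).
  assert (Hrho0 : 0 <= rho).
  { unfold rho. pose proof (mpow_rowsum N A HA K 0 HN).
    assert (sumN N (fun _ => delta) <= sumN N (fun l => mpow N A K 0 l)) by (apply sumN_le; intros; apply Hge; auto).
    rewrite sumN_const in H0. lra. }
  assert (Hrho1 : rho < 1).
  { unfold rho. assert (0 < INR N) by (apply lt_0_INR; auto). nra. }
  assert (Hgeo : forall q, osc N (fun i => mpow N A (q * K) i j) (rho ^ q)).
  { induction q.
    - intros a b Ha Hb. simpl. destruct (Nat.eqb a j), (Nat.eqb b j); lra.
    - change (S q * K)%nat with (K + q * K)%nat. simpl pow.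
      exact (osc_step_gen K (q * K) j (rho ^ q) Hj ltac:(apply pow_le; lra) IHq delta ltac:(lra) Hge). }
  intros eps Heps.
  destruct (pow_lt_1_zero rho ltac:(rewrite Rabs_right; lra) eps Heps) as [q Hq].
  exists (q * K)%nat. intros m Hm.
  specialize (Hq q (le_n q)). rewrite Rabs_right in Hq by (apply Rle_ge, pow_le; lra).
  assert (Ho : osc N (fun i => mpow N A m i j) (rho ^ q)).
  { replace m with ((m - q * K) + q * K)%nat by lia. apply osc_mono; auto. apply pow_le; lra. }
  unfold R_dist. rewrite <- (stationary_pow N A mu m j HA Hmu Hj).
  destruct Hmu as [Hm0 [Hm1 _]].
  replace (mpow N A m i j - sumN N (fun i0 => mu i0 * mpow N A m i0 j))
    with (sumN N (fun i0 => mu i0 * (mpow N A m i j - mpow N A m i0 j))).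
  2:{ rewrite (sumN_ext N _ (fun i0 => mpow N A m i j * mu i0 + (-1) * (mu i0 * mpow N A m i0 j))) by (intros; lra).
      rewrite sumN_plus, sumN_scal, sumN_scal, Hm1. lra. }
  eapply Rle_lt_trans; [apply sumN_abs|].
  eapply Rle_lt_trans; [|apply Hq].
  apply Rle_trans with (sumN N (fun i0 => mu i0 * rho ^ q)).
  - apply sumN_le. intros k Hk. rewrite Rabs_mult, (Rabs_right (mu k)) by (apply Rle_ge; auto).
    apply Rmult_le_compat_l; auto. apply Rabs_le. pose proof (Ho i k Hi Hk). pose proof (Ho k i Hk Hi). lra.
  - rewrite sumN_scal_r, Hm1. lra.
Qed.

End Conv.


Lemma semigroup_eventually (S : nat -> Prop) :
  (forall a b, S a -> S b -> S (a + b)%nat) -> (forall n, S n -> (1 <= n)%nat) ->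
  (forall d, (forall k, S k -> Nat.divide d k) -> d = 1%nat) ->
  exists M, forall n, (M <= n)%nat -> S n.
Proof.
  intros Hadd Hpos Hgcd.
  set (S0 := fun n => n = 0%nat \/ S n).
  assert (S0add : forall a b, S0 a -> S0 b -> S0 (a + b)%nat).
  { intros a b [->|Ha] [->|Hb]; unfold S0; auto. rewrite Nat.add_0_r; auto. }
  assert (S0mul : forall q s, S0 s -> S0 (q * s)%nat).
  { induction q; intros s Hs; simpl; [left; auto|]. apply S0add; auto. }
  assert (S0S : forall n, S0 n -> n <> 0%nat -> S n) by (intros n [H|H] H'; [lia|auto]).
  destruct (classic (exists k, S k)) as [[s0 Hs0]|Hne].
  2:{ exfalso. assert (0%nat = 1%nat) by (apply Hgcd; intros k Hk; exfalso; apply Hne; eauto). lia. }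
  set (P := fun g => (0 < g)%nat /\ exists a b, S0 a /\ S0 b /\ a = (b + g)%nat).
  destruct (Wf_nat.dec_inh_nat_subset_has_unique_least_element P (fun n => classic (P n)))
    as [g [[Pg Hmin] _]].
  { exists s0. split; [apply Hpos; auto|]. exists s0, 0%nat. unfold S0; split; [auto|split; [auto|lia]]. }
  destruct Pg as [Hg [a [b [Ha [Hb Hab]]]]].
  assert (Hdiv : forall s, S s -> Nat.divide g s).
  { intros s Hs. pose proof (Nat.div_mod s g ltac:(lia)) as Hdm.
    pose proof (Nat.mod_upper_bound s g ltac:(lia)) as Hr.
    set (q := (s / g)%nat) in *. set (r := (s mod g)%nat) in *.
    destruct (Nat.eq_dec r 0) as [Hr0|Hr0].
    - exists q. lia.
    - exfalso. assert (P r).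
      { split; [lia|]. exists (s + q * b)%nat, (q * a)%nat. split; [apply S0add; [right; auto|apply S0mul; auto]|].
        split; [apply S0mul; auto|]. subst a. nia. }
      specialize (Hmin r H). lia. }
  assert (g = 1%nat) by (apply Hgcd; auto). subst g.
  destruct (Nat.eq_dec b 0) as [Hb0|Hb0].
  - subst b. simpl in Hab. subst a. exists 1%nat. intros n Hn. apply S0S; [|lia].
    replace n with (n * 1)%nat by lia. apply S0mul; auto.
  - exists (b * b + 1)%nat. intros n Hn. apply S0S; [|lia].
    pose proof (Nat.div_mod n b Hb0) as Hdm. pose proof (Nat.mod_upper_bound n b Hb0) as Hr.
    set (q := (n / b)%nat) in *. set (r := (n mod b)%nat) in *.
    assert (Hq : (b <= q)%nat) by nia.
    replace n with ((q - r) * b + r * a)%nat by nia.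
    apply S0add; apply S0mul; auto.
Qed.

Lemma uniform_bound N (P : nat -> nat -> Prop) :
  (forall i, (i < N)%nat -> exists M, forall n, (M <= n)%nat -> P i n) ->
  exists M, forall i, (i < N)%nat -> forall n, (M <= n)%nat -> P i n.
Proof.
  induction N; intros H.
  - exists 0%nat; intros; lia.
  - destruct IHN as [M1 H1]; [intros; apply H; lia|].
    destruct (H N ltac:(lia)) as [M2 H2].
    exists (M1 + M2)%nat. intros i Hi n Hn. destruct (Nat.eq_dec i N); [subst; apply H2; lia|apply H1; lia].
Qed.

Lemma finite_min N (f : nat -> R) : (forall i, (i < N)%nat -> 0 < f i) ->
  exists d, 0 < d /\ forall i, (i < N)%nat -> d <= f i.
Proof.
  induction N; intros H.
  - exists 1. split; [lra|intros; lia].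
  - destruct IHN as [d [Hd Hd']]; [intros; apply H; lia|].
    exists (Rmin d (f N)). split; [apply Rmin_glb_lt; auto; apply H; lia|].
    intros i Hi. destruct (Nat.eq_dec i N); [subst; apply Rmin_r|].
    eapply Rle_trans; [apply Rmin_l|apply Hd'; lia].
Qed.

Section Prim.
Variable N : nat.
Variable A : nat -> nat -> R.
Hypothesis HA : stochastic N A.
Hypothesis Hirr : irreducible N A.
Hypothesis Hap : aperiodic N A.

Lemma mpow_ge_prod a b i l j : (i < N)%nat -> (l < N)%nat -> (j < N)%nat ->
  mpow N A a i l * mpow N A b l j <= mpow N A (a + b) i j.
Proof.
  intros Hi Hl Hj. rewrite mpow_add; auto.
  apply sumN_ge_term with (f := fun m => mpow N A a i m * mpow N A b m j); auto.
  intros; apply Rmult_le_pos; apply mpow_nonneg; auto.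
Qed.

Lemma diag_eventually i : (i < N)%nat -> exists M, forall n, (M <= n)%nat -> 0 < mpow N A n i i.
Proof.
  intros Hi.
  destruct (semigroup_eventually (fun k => (1 <= k)%nat /\ 0 < mpow N A k i i)) as [M HM].
  - intros a b [Ha1 Ha2] [Hb1 Hb2]. split; [lia|].
    eapply Rlt_le_trans; [|apply (mpow_ge_prod a b i i i); auto]. apply Rmult_lt_0_compat; auto.
  - intros n [H _]; auto.
  - intros d Hd. apply (Hap i Hi d). intros k Hk Hpos. apply Hd; auto.
  - exists M. intros n Hn. apply HM; auto.
Qed.

Lemma primitive_power : exists K delta, 0 < delta /\
  forall i l, (i < N)%nat -> (l < N)%nat -> delta <= mpow N A K i l.
Proof.
  assert (Hpair : forall i, (i < N)%nat -> exists M, forall n, (M <= n)%nat ->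
    forall j, (j < N)%nat -> 0 < mpow N A n i j).
  { intros i Hi.
    destruct (uniform_bound N (fun j n => (j < N)%nat -> 0 < mpow N A n i j)) as [M HM].
    - intros j Hj. destruct (Hirr i j Hi Hj) as [k Hk].
      assert (Hk' : 0 < mpow N A k i j) by (pose proof (mpow_nonneg N A HA k i j Hi Hj); lra).
      destruct (diag_eventually i Hi) as [M0 HM0].
      exists (M0 + k)%nat. intros n Hn _.
      replace n with ((n - k) + k)%nat by lia.
      eapply Rlt_le_trans; [|apply (mpow_ge_prod (n - k) k i i j); auto].
      apply Rmult_lt_0_compat; auto. apply HM0; lia.
    - exists M. intros n Hn j Hj. apply (HM j Hj n Hn Hj). }
  destruct (uniform_bound N (fun i n => forall j, (j < N)%nat -> 0 < mpow N A n i j) Hpair) as [K HK].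
  destruct (finite_min (N * N) (fun p => mpow N A K (p / N) (p mod N))) as [d [Hd Hd']].
  { intros p Hp. assert (0 < N)%nat by nia.
    apply (HK (p / N)%nat); auto.
    - apply Nat.Div0.div_lt_upper_bound; nia.
    - apply Nat.mod_upper_bound; lia. }
  exists K, d. split; auto. intros i l Hi Hl.
  specialize (Hd' (i * N + l)%nat ltac:(nia)).
  rewrite Nat.div_add_l, Nat.div_small, Nat.add_0_r in Hd' by lia.
  rewrite Nat.add_comm, Nat.Div0.mod_add, Nat.mod_small in Hd' by lia. exact Hd'.
Qed.
End Prim.


Lemma cont_sub (c : R) : continuity (fun x => x - c). Proof. apply derivable_continuous; reg. Qed.
Lemma cont_sq (c : R) : continuity (fun x => (x - c) ^ 2). Proof. apply derivable_continuous; reg. Qed.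

Section Prob.
Variable Omega : Type.
Variable integrable : (Omega -> R) -> Prop.
Variable E : (Omega -> R) -> R.
Hypothesis HE : expectation_axioms integrable E.

Lemma E_ext f g : (forall w, f w = g w) -> E f = E g.
Proof. intros H. f_equal. apply functional_extensionality; auto. Qed.
Lemma I_ext f g : (forall w, f w = g w) -> integrable f -> integrable g.
Proof. intros H. replace g with f; auto. apply functional_extensionality; auto. Qed.

Lemma I_const c : integrable (fun _ => c). Proof. apply (proj1 HE). Qed.
Lemma E_const c : E (fun _ => c) = c. Proof. apply (proj1 HE). Qed.
Lemma I_plus f g : integrable f -> integrable g -> integrable (fun w => f w + g w).
Proof. intros; apply (proj1 (proj2 HE)); auto. Qed.
Lemma E_plus f g : integrable f -> integrable g -> E (fun w => f w + g w) = E f + E g.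
Proof. intros; apply (proj1 (proj2 HE)); auto. Qed.
Lemma I_scal c f : integrable f -> integrable (fun w => c * f w).
Proof. intros; apply (proj1 (proj2 (proj2 HE))); auto. Qed.
Lemma E_scal c f : integrable f -> E (fun w => c * f w) = c * E f.
Proof. intros; apply (proj1 (proj2 (proj2 HE))); auto. Qed.

Lemma IE_sum n (f : nat -> Omega -> R) : (forall k, (k < n)%nat -> integrable (f k)) ->
  integrable (fun w => sumN n (fun k => f k w)) /\ E (fun w => sumN n (fun k => f k w)) = sumN n (fun k => E (f k)).
Proof.
  induction n; intros H; simpl.
  - split; [apply I_const|apply E_const].
  - destruct IHn as [I1 E1]; [intros; apply H; lia|].
    split; [apply I_plus; auto; apply H; lia|]. rewrite E_plus, E1; auto.
Qed.

Lemma orth_sq (Z : nat -> Omega -> R) M s (c : nat -> R) :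
  (forall p, (p < M)%nat -> integrable (Z p)) ->
  (forall p q, (p < M)%nat -> (q < M)%nat -> integrable (fun w => Z p w * Z q w)) ->
  (forall p q, (p < M)%nat -> (q < M)%nat -> p <> q -> E (fun w => Z p w * Z q w) = 0) ->
  (forall p, (p < M)%nat -> E (fun w => Z p w * Z p w) = s) ->
  integrable (fun w => (sumN M (fun p => c p * Z p w)) ^ 2) /\
  E (fun w => (sumN M (fun p => c p * Z p w)) ^ 2) = s * sumN M (fun p => c p ^ 2).
Proof.
  intros H1 H2 H3 H4. induction M; simpl sumN.
  - split.
    + apply (I_ext (fun _ => 0)); [intros; simpl; ring|apply I_const].
    + rewrite (E_ext _ (fun _ => 0)) by (intros; simpl; ring). rewrite E_const; ring.
  - destruct IHM as [I1 E1]; try (intros; apply H1 || apply H2 || apply H3 || apply H4; lia).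
    replace (sumN M (fun p => c p * (c p * 1))) with (sumN M (fun p => c p ^ 2)) by (apply sumN_ext; intros; simpl; ring).
    assert (Hc : integrable (fun w => sumN M (fun p => c p * (Z M w * Z p w))) /\
       E (fun w => sumN M (fun p => c p * (Z M w * Z p w))) = 0).
    { destruct (IE_sum M (fun p w => c p * (Z M w * Z p w))) as [Ia Ea].
      { intros; apply I_scal; apply H2; lia. }
      split; auto. rewrite Ea. rewrite (sumN_ext _ _ (fun _ => 0)). apply sumN_zero.
      intros k Hk. rewrite E_scal by (apply H2; lia). rewrite H3 by lia. ring. }
    destruct Hc as [Ic Ec].
    set (S := fun w => sumN M (fun p => c p * Z p w)) in *.
    assert (Heq : forall w, (S w + c M * Z M w) ^ 2 =
       (S w ^ 2 + (2 * c M) * sumN M (fun p => c p * (Z M w * Z p w))) + c M ^ 2 * (Z M w * Z M w)).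
    { intros w. unfold S. rewrite (sumN_ext M (fun p => c p * (Z M w * Z p w)) (fun p => Z M w * (c p * Z p w))) by (intros; ring).
      rewrite sumN_scal. ring. }
    assert (I2 : integrable (fun w => S w ^ 2 + (2 * c M) * sumN M (fun p => c p * (Z M w * Z p w)))).
    { apply I_plus; auto. apply I_scal; auto. }
    assert (I3 : integrable (fun w => c M ^ 2 * (Z M w * Z M w))) by (apply I_scal, H2; lia).
    split.
    + eapply I_ext; [intros w; symmetry; apply Heq|]. apply I_plus; auto.
    + rewrite (E_ext _ (fun w => (S w ^ 2 + (2 * c M) * sumN M (fun p => c p * (Z M w * Z p w))) + c M ^ 2 * (Z M w * Z M w)))
        by (intros w; exact (Heq w)).
      unfold S. rewrite E_plus, E_plus, E_scal, E_scal, E1, Ec, H4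
        by (first [assumption | apply I_scal; auto | apply H2; lia | lia]).
      ring.
Qed.

Variable X0 : Omega -> R.
Variable X : nat -> nat -> Omega -> R.
Variable N : nat.
Hypothesis HX0 : integrable X0.
Hypothesis HX02 : integrable (fun w => X0 w ^ 2).
Hypothesis Hid : identically_distributed N integrable E X0 X.
Hypothesis Hind : mutually_independent N integrable E X.
Hypothesis HN : (0 < N)%nat.

Let th := E X0.
Let s2 := E (fun w => (X0 w - th) ^ 2).

Lemma I_X0c : integrable (fun w => X0 w - th).
Proof. apply (I_ext (fun w => X0 w + (fun _ => - th) w)); [intros; simpl; ring|]. apply I_plus; auto. apply I_const. Qed.
Lemma E_X0c : E (fun w => X0 w - th) = 0.
Proof. rewrite (E_ext _ (fun w => X0 w + (fun _ => - th) w)) by (intros; simpl; ring).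
  rewrite E_plus, E_const; auto. unfold th; ring. apply I_const. Qed.
Lemma I_X0sq : integrable (fun w => (X0 w - th) ^ 2).
Proof.
  apply (I_ext (fun w => (X0 w ^ 2 + (-2 * th) * X0 w) + (fun _ => th ^ 2) w)); [intros; simpl; ring|].
  apply I_plus; [apply I_plus; auto; apply I_scal; auto| apply I_const].
Qed.

Lemma Y_facts t j : (1 <= t)%nat -> (j < N)%nat ->
  integrable (fun w => X t j w - th) /\ E (fun w => X t j w - th) = 0 /\
  integrable (fun w => (X t j w - th) * (X t j w - th)) /\ E (fun w => (X t j w - th) * (X t j w - th)) = s2.
Proof.
  intros Ht Hj.
  destruct (Hid t j (fun x => x - th) Ht Hj (cont_sub th)) as [[_ Ia] Ea].
  destruct (Hid t j (fun x => (x - th) ^ 2) Ht Hj (cont_sq th)) as [[_ Ib] Eb].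
  split; [apply Ia, I_X0c|]. split; [rewrite Ea; apply E_X0c|].
  split.
  - eapply I_ext; [|apply Ib, I_X0sq]. intros; simpl; ring.
  - rewrite (E_ext _ (fun w => (X t j w - th) ^ 2)) by (intros; simpl; ring). rewrite Eb. reflexivity.
Qed.

Lemma Y_cross t j t' j' : (1 <= t)%nat -> (j < N)%nat -> (1 <= t')%nat -> (j' < N)%nat -> (t, j) <> (t', j') ->
  integrable (fun w => (X t j w - th) * (X t' j' w - th)) /\ E (fun w => (X t j w - th) * (X t' j' w - th)) = 0.
Proof.
  intros Ht Hj Ht' Hj' Hne.
  destruct (Hind ((t, j) :: (t', j') :: nil) (fun _ x => x - th)) as [I1 E1].
  - constructor; [simpl; intros [H|[]]; auto|constructor; [simpl; auto|constructor]].
  - repeat constructor; simpl; auto.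
  - intros; apply cont_sub.
  - intros p [<-|[<-|[]]]; simpl; apply Y_facts; auto.
  - simpl in I1, E1. split.
    + eapply I_ext; [|exact I1]. intros; simpl; ring.
    + rewrite (E_ext _ (fun w => (X t j w - th) * ((X t' j' w - th) * 1))) by (intros; ring).
      rewrite E1. destruct (Y_facts t j Ht Hj) as [_ [-> _]]. ring.
Qed.

Definition Zf (p : nat) (w : Omega) : R := X (S (p / N)) (p mod N) w - th.

Lemma Z_sq (M : nat) (c : nat -> R) :
  integrable (fun w => (sumN M (fun p => c p * Zf p w)) ^ 2) /\
  E (fun w => (sumN M (fun p => c p * Zf p w)) ^ 2) = s2 * sumN M (fun p => c p ^ 2).
Proof.
  assert (Hm : forall p, (p mod N < N)%nat) by (intros; apply Nat.mod_upper_bound; lia).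
  apply orth_sq; unfold Zf.
  - intros p _. apply Y_facts; auto; lia.
  - intros p q _ _. destruct (Nat.eq_dec p q).
    + subst. apply Y_facts; auto; lia.
    + apply Y_cross; auto; try lia. intros Heq. injection Heq; intros H1 H2.
      apply n. rewrite (Nat.div_mod p N), (Nat.div_mod q N) by lia. lia.
  - intros p q _ _ Hpq. apply Y_cross; auto; try lia. intros Heq. injection Heq; intros H1 H2.
    apply Hpq. rewrite (Nat.div_mod p N), (Nat.div_mod q N) by lia. lia.
  - intros p _. apply Y_facts; auto; lia.
Qed.

End Prob.


Lemma sumN_S n f : sumN (S n) f = sumN n f + f n. Proof. reflexivity. Qed.

Lemma theta_repr {Omega : Type} N A (X : nat -> nat -> Omega -> R) th (HA : stochastic N A) n : forall i w, (i < N)%nat ->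
  thetahat_aux N A X n i w - th =
  / INR (S n) * sumN (S n) (fun k => sumN N (fun j => mpow N A (n - k) i j * (X (S k) j w - th))).
Proof.
  induction n; intros i w Hi.
  - simpl thetahat_aux. rewrite sumN_S. simpl sumN at 1. rewrite Nat.sub_0_r.
    simpl mpow. rewrite sumN_delta_l with (f := fun j => X 1%nat j w - th); auto. simpl INR. field.
  - set (T := sumN (S n) (fun k => sumN N (fun l => mpow N A (S n - k) i l * (X (S k) l w - th)))).
    assert (H1 : sumN N (fun j => A i j * thetahat_aux N A X n j w) = th + / INR (S n) * T).
    { rewrite (sumN_ext N _ (fun j => th * A i j + / INR (S n) * sumN (S n) (fun k => sumN N (fun l =>
          A i j * mpow N A (n - k) j l * (X (S k) l w - th))))).
      2:{ intros j Hj. replace (thetahat_aux N A X n j w) with (th + (thetahat_aux N A X n j w - th)) by ring.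
          rewrite IHn by auto.
          rewrite Rmult_plus_distr_l.
          rewrite (sumN_ext (S n) (fun k => sumN N (fun l => A i j * mpow N A (n - k) j l * (X (S k) l w - th)))
            (fun k => A i j * sumN N (fun l => mpow N A (n - k) j l * (X (S k) l w - th)))).
          2:{ intros; rewrite <- sumN_scal; apply sumN_ext; intros; ring. }
          rewrite sumN_scal. ring. }
      rewrite sumN_plus, sumN_scal. destruct HA as [_ HA2]. rewrite HA2 by auto. rewrite sumN_scal.
      f_equal; [ring|]. f_equal. unfold T.
      rewrite sumN_swap. apply sumN_ext. intros k Hk. rewrite sumN_swap. apply sumN_ext. intros l Hl.
      rewrite sumN_scal_r. replace (S n - k)%nat with (S (n - k)) by lia.
      rewrite mpow_S_left; auto. }
    assert (H2 : sumN N (fun l => mpow N A (S n - S n) i l * (X (S (S n)) l w - th)) = X (S (S n)) i w - th).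
    { rewrite Nat.sub_diag. simpl mpow. apply sumN_delta_l with (f := fun l => X (S (S n)) l w - th); auto. }
    cbn [thetahat_aux]. rewrite sumN_S. fold T. rewrite H2, H1.
    assert (0 < INR (S n)) by (apply lt_0_INR; lia).
    rewrite (S_INR (S n)). field. lra.
Qed.

Definition Fr N A m := sumN N (fun i => sumN N (fun j => mpow N A m i j ^ 2)).

Section Formulas.
Variable Omega : Type.
Variable integrable : (Omega -> R) -> Prop.
Variable E : (Omega -> R) -> R.
Hypothesis HE : expectation_axioms integrable E.
Variable X0 : Omega -> R.
Variable X : nat -> nat -> Omega -> R.
Variable N : nat.
Variable A : nat -> nat -> R.
Hypothesis HX0 : integrable X0.
Hypothesis HX02 : integrable (fun w => X0 w ^ 2).
Hypothesis Hid : identically_distributed N integrable E X0 X.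
Hypothesis Hind : mutually_independent N integrable E X.
Hypothesis HN : (0 < N)%nat.
Hypothesis HA : stochastic N A.

Let s2 := E (fun w => (X0 w - E X0) ^ 2).

Lemma theta_flat n i w : (i < N)%nat ->
  (thetahat N A X (S n) i w - E X0) ^ 2 =
  (sumN (S n * N) (fun p => (/ INR (S n) * mpow N A (n - p / N) i (p mod N)) * Zf Omega E X0 X N p w)) ^ 2.
Proof.
  intros Hi. unfold thetahat. replace (S n - 1)%nat with n by lia.
  rewrite theta_repr by auto. f_equal.
  rewrite (sumN_flatten (S n) N (fun k j => mpow N A (n - k) i j * (X (S k) j w - E X0))) by auto.
  rewrite <- sumN_scal. apply sumN_ext. intros; unfold Zf; ring.
Qed.

Lemma denom n :
  E (fun w => sumN N (fun i => (thetahat N A X (S n) i w - E X0) ^ 2)) =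
  s2 / INR (S n) ^ 2 * sumN (S n) (Fr N A).
Proof.
  assert (Hi : forall i, (i < N)%nat -> integrable (fun w => (thetahat N A X (S n) i w - E X0) ^ 2) /\
     E (fun w => (thetahat N A X (S n) i w - E X0) ^ 2) =
     s2 / INR (S n) ^ 2 * sumN (S n) (fun k => sumN N (fun j => mpow N A (n - k) i j ^ 2))).
  { intros i Hi.
    destruct (Z_sq Omega integrable E HE X0 X N HX0 HX02 Hid Hind HN (S n * N)
      (fun p => / INR (S n) * mpow N A (n - p / N) i (p mod N))) as [I1 E1].
    split.
    - eapply (I_ext Omega integrable); [|exact I1]. intros w; rewrite theta_flat; auto.
    - rewrite (E_ext Omega E _ _ (fun w => theta_flat n i w Hi)). rewrite E1. fold s2.
      rewrite (sumN_flatten (S n) N (fun k j => mpow N A (n - k) i j ^ 2)) by auto.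
      unfold Rdiv. rewrite Rmult_assoc. f_equal. rewrite <- sumN_scal. apply sumN_ext.
      intros. assert (INR (S n) <> 0) by (apply not_0_INR; lia). field. auto. }
  destruct (IE_sum Omega integrable E HE N (fun i w => (thetahat N A X (S n) i w - E X0) ^ 2)) as [_ E2].
  { intros; apply Hi; auto. }
  rewrite E2. rewrite (sumN_ext N _ (fun i => s2 / INR (S n) ^ 2 * sumN (S n) (fun k => sumN N (fun j => mpow N A (n - k) i j ^ 2)))).
  2:{ intros; apply Hi; auto. }
  rewrite sumN_scal. f_equal. rewrite sumN_swap.
  rewrite <- (sumN_rev (S n) (Fr N A)). apply sumN_ext. intros k Hk. unfold Fr. replace (S n - 1 - k)%nat with (n - k)%nat by lia. reflexivity.
Qed.

Lemma numer n :
  E (fun w => sumN N (fun _ => (Xbar N X (S n) w - E X0) ^ 2)) = s2 / INR (S n).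
Proof.
  assert (HX : forall w, Xbar N X (S n) w - E X0 =
     sumN (S n * N) (fun p => / (INR N * INR (S n)) * Zf Omega E X0 X N p w)).
  { intros w. unfold Xbar, Zf.
    rewrite <- (sumN_flatten (S n) N (fun k j => / (INR N * INR (S n)) * (X (S k) j w - E X0))) by auto.
    rewrite sumN_swap.
    rewrite (sumN_ext (S n) (fun k => sumN N (fun j => / (INR N * INR (S n)) * (X (S k) j w - E X0)))
      (fun k => / (INR N * INR (S n)) * sumN N (fun j => X (S k) j w) + (- / (INR N * INR (S n)) * E X0) * INR N)).
    2:{ intros k Hk. rewrite (sumN_ext N _ (fun j => / (INR N * INR (S n)) * X (S k) j w + (- / (INR N * INR (S n)) * E X0)))
          by (intros; ring).
        rewrite sumN_plus, sumN_scal, sumN_const. ring. }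
    rewrite sumN_plus, sumN_scal, sumN_const.
    assert (INR (S n) <> 0) by (apply not_0_INR; lia). assert (INR N <> 0) by (apply not_0_INR; lia).
    field. auto. }
  destruct (Z_sq Omega integrable E HE X0 X N HX0 HX02 Hid Hind HN (S n * N)
      (fun p => / (INR N * INR (S n)))) as [I1 E1].
  assert (I2 : integrable (fun w => (Xbar N X (S n) w - E X0) ^ 2)).
  { eapply (I_ext Omega integrable); [|exact I1]. intros w; rewrite HX; auto. }
  assert (E2 : E (fun w => (Xbar N X (S n) w - E X0) ^ 2) = s2 / (INR N * INR (S n))).
  { rewrite (E_ext Omega E _ (fun w => (sumN (S n * N) (fun p => / (INR N * INR (S n)) * Zf Omega E X0 X N p w)) ^ 2))
      by (intros; rewrite HX; auto).
    rewrite E1. fold s2. rewrite sumN_const, mult_INR.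
    assert (INR (S n) <> 0) by (apply not_0_INR; lia). assert (INR N <> 0) by (apply not_0_INR; lia).
    field. auto. }
  destruct (IE_sum Omega integrable E HE N (fun _ w => (Xbar N X (S n) w - E X0) ^ 2)) as [_ E3].
  { intros; auto. }
  rewrite E3, sumN_const, E2.
  assert (INR (S n) <> 0) by (apply not_0_INR; lia). assert (INR N <> 0) by (apply not_0_INR; lia).
  field. auto.
Qed.

End Formulas.


Lemma cv_sumN n (u : nat -> nat -> R) (l : nat -> R) :
  (forall k, (k < n)%nat -> Un_cv (fun m => u m k) (l k)) ->
  Un_cv (fun m => sumN n (fun k => u m k)) (sumN n l).
Proof.
  induction n; intros H; simpl.
  - intros eps Heps. exists 0%nat. intros. unfold R_dist. rewrite Rminus_diag, Rabs_R0. auto.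
  - apply CV_plus; [apply IHn; intros; apply H; lia| apply H; lia].
Qed.

Lemma sum_f_R0_sumN f n : sum_f_R0 f n = sumN (S n) f.
Proof. induction n; simpl; [ring|]. rewrite IHn. simpl. ring. Qed.

Lemma sumN_nonneg_zero n f : (forall k, (k < n)%nat -> 0 <= f k) -> sumN n f = 0 ->
  forall k, (k < n)%nat -> f k = 0.
Proof. intros H1 H2 k Hk. pose proof (sumN_ge_term n f k H1 Hk). pose proof (H1 k Hk). lra. Qed.

Theorem proposition2
  (Omega : Type) (integrable : (Omega -> R) -> Prop) (E : (Omega -> R) -> R)
  (X0 : Omega -> R) (X : nat -> nat -> Omega -> R)
  (N : nat) (A : nat -> nat -> R) (mu : nat -> R) :
  expectation_axioms integrable E ->
  integrable X0 -> integrable (fun w => X0 w ^ 2) ->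
  0 < E (fun w => (X0 w - E X0) ^ 2) ->
  identically_distributed N integrable E X0 X ->
  mutually_independent N integrable E X ->
  (2 <= N)%nat ->
  stochastic N A -> irreducible N A -> aperiodic N A ->
  stationary_distribution N A mu ->
  Un_cv (fun n => tau N E X0 A X (S n))
        (/ (INR N * sumN N (fun j => mu j ^ 2))).
Proof.
  intros HE HX0 HX02 Hs2 Hid Hind HN2 HA Hirr Hap Hmu.
  assert (HN : (0 < N)%nat) by lia.
  destruct (primitive_power N A HA Hirr Hap) as [K [delta [Hdel Hge]]].
  set (L := INR N * sumN N (fun j => mu j ^ 2)).
  assert (HF : Un_cv (Fr N A) L).
  { unfold Fr, L. rewrite <- sumN_const.
    apply cv_sumN. intros i Hi. apply cv_sumN. intros j Hj. simpl.
    apply CV_mult; [|apply CV_mult; [|intros eps Heps; exists 0%nat; intros; unfold R_dist; rewrite Rminus_diag, Rabs_R0; auto]];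
    apply (entry_conv N A mu HA Hmu HN K delta); auto. }
  assert (HL : L <> 0).
  { unfold L. intros H0. apply Rmult_integral in H0. destruct H0 as [H0|H0].
    - exact (not_0_INR N ltac:(lia) H0).
    - destruct Hmu as [Hm0 [Hm1 _]].
      assert (Hz := sumN_nonneg_zero N (fun j => mu j ^ 2) ltac:(intros; apply pow2_ge_0) H0).
      rewrite (sumN_ext N mu (fun _ => 0)) in Hm1. rewrite sumN_zero in Hm1; lra.
      intros k Hk. specialize (Hz k Hk). simpl in Hz. nra. }
  pose proof (Cesaro_1 (Fr N A) L HF) as HC.
  apply CV_shift' with (k := 1%nat) in HC.
  assert (HC2 : Un_cv (fun n => / (sumN (S n) (Fr N A) / INR (S n))) (/ L)).
  { apply (continuity_seq (fun x => / x)).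
    - apply continuity_pt_inv with (f := fun x => x); auto. apply derivable_continuous_pt; reg.
    - eapply Un_cv_ext; [|exact HC]. intros n. simpl.
      replace (n + 1)%nat with (S n) by lia. rewrite sum_f_R0_sumN. reflexivity. }
  eapply Un_cv_ext; [|exact HC2]. intros n.
  unfold tau. rewrite (numer Omega integrable E HE X0 X N HX0 HX02 Hid Hind HN n).
  rewrite (denom Omega integrable E HE X0 X N A HX0 HX02 Hid Hind HN HA n).
  assert (HSpos : 0 < sumN (S n) (Fr N A)).
  { eapply Rlt_le_trans; [|apply (sumN_ge_term (S n) (Fr N A) 0%nat)].
    - unfold Fr. eapply Rlt_le_trans; [|apply (sumN_ge_term N _ 0%nat)]; try lia.
      + eapply Rlt_le_trans; [|apply (sumN_ge_term N _ 0%nat)]; try lia.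
        * simpl. lra.
        * intros; apply pow2_ge_0.
      + intros; apply sumN_nonneg; intros; apply pow2_ge_0.
    - intros; unfold Fr; apply sumN_nonneg; intros; apply sumN_nonneg; intros; apply pow2_ge_0.
    - lia. }
  assert (INR (S n) <> 0) by (apply not_0_INR; lia).
  field. split; lra.
Qed.
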